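(* Let $N=(P,T;F)$ be a finite Petri net without isolated elements (every place and transition is incident to some arc), with $T=\{t_1,\dots,t_n\}$. Let $A_0=E$ be the empty module and, for $i=1,\dots,n$, let $A_i = A_{i-1}\bullet[t_i]$ (taking a copy of $[t_i]$ whose node set is disjoint from that of $A_{i-1}$). Then $A_n$ is isomorphic to $[N]$.
   Context: An alphabet $\Sigma$ is a finite set of labels. An interface over $\Sigma$ is a finite set $R$ in which every element carries a label from $\Sigma$ and a positive integer index, such that for each label $l$, if $R$ contains exactly $k$ elements labeled $l$, these carry the indices $1,\dots,k$. A module $G$ over $\Sigma$ is a finite directed graph $(V,E)$ together with two interfaces over $\Sigma$, the left interface ${}^*G\subseteq V$ and the right interface $G^*\subseteq V$ (not necessarily disjoint). Two modules are isomorphic if there is a bijection between their node sets preserving edges, interface membership, labels, and indices. The empty module $E$ has no nodes, no edges, and empty interfaces. Harmonic pairs: for disjoint interfaces $R,S$, elements $r\in R$, $s\in S$ form a harmonic pair $\{r,s\}$ if they have the same label and the same index (in $R$ resp. $S$). Composition: let $A,B$ be modules with disjoint node sets. For each node $x$ of $A$ or $B$ put $x'=\{x,y\}$ if $\{x,y\}$ is a harmonic pair of $A^*$ and ${}^*B$, and $x'=x$ otherwise. For a label $l$ let $m_l$ be the number of $l$-labeled harmonic pairs of $A^*$ and ${}^*B$. $A\bullet B$ has nodes all $x'$ and edges all $(x',z')$ with $(x,z)$ an edge of $A$ or $B$. Left interface: each $x\in{}^*A$ with label $l$, index $n$ gives $x'$ with label $l$, index $n$; each $x\in{}^*B$ without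 harmonic partner in $A^*$, with label $l$ and index $n$ in ${}^*B$, belongs with index $p+n-m_l$, $p$ the number of $l$-labeled elements of ${}^*A$. Right interface: each $x\in B^*$ with label $l$, index $n$ gives $x'$ with label $l$, index $n$; each $x\in A^*$ without harmonic partner in ${}^*B$, with label $l$ and index $n$ in $A^*$, belongs with index $q+n-m_l$, $q$ the number of $l$-labeled elements of $B^*$. Transition atoms: for a net $N=(P,T;F)$ with presets ${}^\bullet t$ and postsets $t^\bullet$, and $t\in T$, the module $[t]$ has node set ${}^\bullet t\cup t^\bullet\cup\{t\}$, edge set $({}^\bullet t\times\{t\})\cup(\{t\}\times t^\bullet)$, and both interfaces equal to ${}^\bullet t\cup t^\bullet$, where each interface place is labeled by its own identity (the alphabet is $P$; hence all indices are $1$). The module $[N]$ is the graph $(P\cup T, F)$ with both interfaces equal to $P$, each place labeled by its own identity. *)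

(* Defs.v *)
From mathcomp Require Import all_boot.
Set Implicit Arguments. Unset Strict Implicit. Unset Printing Implicit Defensive.

(* Each interface carries its own labelling
   and indexing (a node in both interfaces may have different label/index in
   each).  Labels are [option Sigma]: interface elements carry [Some l];
   the value on non-interface nodes is irrelevant (junk). *)
Record modul (Sigma : eqType) := Modul {
  mnode : finType;
  medge : rel mnode;
  mL : {set mnode};
  mR : {set mnode};
  mllab : mnode -> option Sigma;
  mlidx : mnode -> nat;
  mrlab : mnode -> option Sigma;
  mridx : mnode -> nat }.

(* Interface condition: every element labelled, and for each label l with k
   elements, indices are exactly 1..k (injective, in range). *)
Definition is_interface (Sigma : eqType) (V : finType) (S : {set V})
  (lab : V -> option Sigma) (idx : V -> nat) : Prop :=
  forall x, x \in S -> lab x != None /\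
    0 < idx x <= #|[set y in S | lab y == lab x]| /\
    (forall y, y \in S -> lab y = lab x -> idx y = idx x -> y = x).

Definition module_wf (Sigma : eqType) (G : modul Sigma) : Prop :=
  is_interface (@mL _ G) (@mllab _ G) (@mlidx _ G) /\
  is_interface (@mR _ G) (@mrlab _ G) (@mridx _ G).

Definition mod_iso (Sigma : eqType) (G H : modul Sigma) : Prop :=
  exists h : mnode G -> mnode H,
    bijective h /\
    (forall x y, @medge _ H (h x) (h y) = @medge _ G x y) /\
    (forall x, (h x \in @mL _ H) = (x \in @mL _ G)) /\
    (forall x, (h x \in @mR _ H) = (x \in @mR _ G)) /\
    (forall x, x \in @mL _ G -> @mllab _ H (h x) = @mllab _ G x /\ @mlidx _ H (h x) = @mlidx _ G x) /\
    (forall x, x \in @mR _ G -> @mrlab _ H (h x) = @mrlab _ G x /\ @mridx _ H (h x) = @mridx _ G x).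

Definition empty_mod (Sigma : eqType) : modul Sigma :=
  @Modul Sigma void (fun _ _ => false) set0 set0
    (fun _ => None) (fun _ => 0) (fun _ => None) (fun _ => 0).

(* Nodes of A . B: the nodes of A (a harmonic pair {x,y}
   is represented by its A-side x) together with the nodes of B having no
   harmonic partner in A*.  This is the disjoint union with harmonic pairs
   identified (the node sets of A and B are made disjoint by the sum type). *)
Section Compose.
Variables (Sigma : eqType) (A B : modul Sigma).
Local Notation VA := (mnode A).
Local Notation VB := (mnode B).

Definition harmonic (x : VA) (y : VB) : bool :=
  [&& x \in @mR _ A, y \in @mL _ B, @mrlab _ A x == @mllab _ B y & @mridx _ A x == @mlidx _ B y].

Definition matchedB (y : VB) : bool := [exists x, harmonic x y].
Definition matchedA (x : VA) : bool := [exists y, harmonic x y].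

Definition compV : finType := (VA + {y : VB | ~~ matchedB y})%type.

Definition fA (x : VA) : compV := inl x.

Definition fB (y : VB) : compV :=
  (if matchedB y as b return (matchedB y = b -> compV) then
     fun h => inl (xchoose (existsP h))
   else fun h => inr (exist _ y (negbT h))) (erefl _).

Definition mcount (l : option Sigma) : nat :=
  #|[set xy : VA * VB | harmonic xy.1 xy.2 && (@mrlab _ A xy.1 == l)]|.
Definition pcount (l : option Sigma) : nat := #|[set x in @mL _ A | @mllab _ A x == l]|.
Definition qcount (l : option Sigma) : nat := #|[set y in @mR _ B | @mrlab _ B y == l]|.

Definition comp_edge : rel compV := fun u v =>
  [exists x, exists z, [&& @medge _ A x z, fA x == u & fA z == v]] ||
  [exists y, exists w, [&& @medge _ B y w, fB y == u & fB w == v]].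

Definition comp_L : {set compV} :=
  [set u | [exists x, (x \in @mL _ A) && (fA x == u)] ||
           [exists y, [&& y \in @mL _ B, ~~ matchedB y & fB y == u]]].

Definition comp_R : {set compV} :=
  [set u | [exists y, (y \in @mR _ B) && (fB y == u)] ||
           [exists x, [&& x \in @mR _ A, ~~ matchedA x & fA x == u]]].

Definition comp_llab (u : compV) : option Sigma :=
  match u with inl x => @mllab _ A x | inr y => @mllab _ B (val y) end.

Definition comp_lidx (u : compV) : nat :=
  match u with
  | inl x => @mlidx _ A x
  | inr y => pcount (@mllab _ B (val y)) + @mlidx _ B (val y) - mcount (@mllab _ B (val y))
  end.

Definition comp_rlab (u : compV) : option Sigma :=
  match [pick y in @mR _ B | fB y == u] with
  | Some y => @mrlab _ B y
  | None => match u with inl x => @mrlab _ A x | inr _ => None end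
  end.

Definition comp_ridx (u : compV) : nat :=
  match [pick y in @mR _ B | fB y == u] with
  | Some y => @mridx _ B y
  | None => match u with
            | inl x => qcount (@mrlab _ A x) + @mridx _ A x - mcount (@mrlab _ A x)
            | inr _ => 0 end
  end.

Definition compose : modul Sigma :=
  @Modul Sigma compV comp_edge comp_L comp_R comp_llab comp_lidx comp_rlab comp_ridx.
End Compose.

(* Petri nets N = (P,T;F): arcs p -> t given by [pre p t], arcs t -> p by
   [post t p]. *)
Section Net.
Variables (P T : finType) (pre : P -> T -> bool) (post : T -> P -> bool).

(* Transition atom [t]: nodes = pre(t) u post(t) u {t}; [None] is t. *)
Definition atomV (t : T) : finType := option {p : P | pre p t || post t p}.

Definition atom (t : T) : modul P :=
  @Modul P (atomV t)
    (fun u v => match u, v with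
                | Some p, None => pre (val p) t
                | None, Some p => post t (val p)
                | _, _ => false end)
    [set u | u != None] [set u | u != None]
    (fun u => omap val u) (fun _ => 1)
    (fun u => omap val u) (fun _ => 1).

Definition net_mod : modul P :=
  @Modul P (P + T)%type
    (fun u v => match u, v with
                | inl p, inr t => pre p t
                | inr t, inl p => post t p
                | _, _ => false end)
    [set u | if u is inl _ then true else false] [set u | if u is inl _ then true else false]
    (fun u => if u is inl p then Some p else None) (fun _ => 1)
    (fun u => if u is inl p then Some p else None) (fun _ => 1).
End Net.

(* Main.v *)
Require Import Defs.
From mathcomp Require Import all_boot.
Set Implicit Arguments. Unset Strict Implicit. Unset Printing Implicit Defensive.

Section Proof.
Variables (P T : finType) (pre : P -> T -> bool) (post : T -> P -> bool).

Definition nedge (u v : P + T) : bool :=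
  match u, v with
  | inl p, inr t => pre p t
  | inr t, inl p => post t p
  | _, _ => false end.
Definition isplace (u : P + T) : bool := if u is inl _ then true else false.
Definition plabel (u : P + T) : option P := if u is inl p then Some p else None.
Definition inS (S : {set T}) (u : P + T) : bool :=
  match u with inl p => [exists t in S, pre p t || post t p] | inr t => t \in S end.

Record InvW (G : modul P) (S : {set T}) (h : mnode G -> P + T) : Prop := {
  iw_inj : injective h;
  iw_img : forall a, inS S a <-> exists x, h x = a;
  iw_edge : forall x y, medge x y = nedge (h x) (h y);
  iw_L : forall x, (x \in mL G) = isplace (h x);
  iw_R : forall x, (x \in mR G) = isplace (h x);
  iw_Llab : forall x, x \in mL G -> mllab x = plabel (h x) /\ mlidx x = 1;
  iw_Rlab : forall x, x \in mR G -> mrlab x = plabel (h x) /\ mridx x = 1 }.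

Definition Inv G S := exists h, @InvW G S h.

Lemma fBP (Sigma : eqType) (A B : modul Sigma) (y : mnode B) :
  (exists2 x, harmonic x y & fB A y = inl x) \/
  (exists hy, fB A y = inr (exist _ y hy)).
Proof.
pose Q (u : compV A B) := (exists2 x, @harmonic _ A B x y & u = inl x) \/
  (exists hy, u = inr (exist (fun y => ~~ matchedB A y) y hy)).
suff : Q (fB A y) by [].
rewrite /fB. move: (erefl (matchedB A y)).
case: {2 3}(matchedB A y) => e.
  left; exists (xchoose (existsP e)) => //; exact: (xchooseP (existsP e)).
right; exists (negbT e); done.
Qed.

Section Step.
Variables (A : modul P) (S : {set T}) (t : T) (h : mnode A -> P + T).
Hypothesis W : InvW S h.
Hypothesis tS : t \notin S.
Let B := atom pre post t.
Definition g (y : mnode B) : P + T := if y is Some p then inl (val p) else inr t.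
Definition h' (u : compV A B) : P + T := match u with inl x => h x | inr y => g (val y) end.

Lemma harmonicE x (y : mnode B) :
  harmonic x y = (if y is Some p then h x == inl (val p) else false).
Proof.
rewrite /harmonic; case: y => [p|]; rewrite ?inE ?andbF //=.
case E: (h x) => [q|q].
  have Rx : x \in mR A by rewrite (iw_R W) E.
  have [-> ->] := iw_Rlab W Rx; rewrite Rx E /= andbT.
  by apply/eqP/eqP => [[->]|[->]].
by rewrite (iw_R W) E.
Qed.

Lemma hfB y : h' (fB A y) = g y.
Proof.
case: (fBP A y) => [[x hx ->]|[hy ->]] //=.
rewrite harmonicE in hx; case: y hx => [p|] //= /eqP //.
Qed.

Lemma unmatched (p : {p : P | pre p t || post t p}) :
  ~~ matchedB A (Some p : mnode B) -> forall x, h x != inl (val p).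
Proof.
move=> /existsPn nm x; apply/negP => e.
by move: (nm x); rewrite harmonicE e.
Qed.

Lemma g_inj : injective g.
Proof. by case=> [p|] [p'|] //= [] /val_inj ->. Qed.

Lemma h'_inj : injective h'.
Proof.
case=> [x|[y hy]] [x'|[y' hy']] //=.
- by move/(iw_inj W) ->.
- move=> e; exfalso; case: y' hy' e => [p|] /= hy' e.
    by move: (unmatched hy' x); rewrite e eqxx.
  have : inS S (h x) by apply/(iw_img W); exists x.
  by rewrite e /= (negbTE tS).
- move=> e; exfalso; case: y hy e => [p|] /= hy e.
    by move: (unmatched hy x'); rewrite -e eqxx.
  have : inS S (h x') by apply/(iw_img W); exists x'.
  by rewrite -e /= (negbTE tS).
- move=> e; have ey : y = y' by apply: g_inj.
  subst y'; congr inr; exact: val_inj.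
Qed.

Lemma fBE y u : (fB A y == u) = (g y == h' u).
Proof.
apply/eqP/eqP => [<-|e]; first by rewrite hfB.
by apply: h'_inj; rewrite hfB.
Qed.

Lemma fAE x u : (fA B x == u) = (h x == h' u).
Proof.
apply/eqP/eqP => [<-|e]; first by [].
by apply: h'_inj.
Qed.


Lemma fB_nm (y : mnode B) (nm : ~~ matchedB A y) : exists hy, fB A y = inr (exist _ y hy).
Proof.
case: (fBP A y) => [[x hx _]|//].
by move/negP: nm => []; apply/existsP; exists x.
Qed.

Lemma adjP (p : {p : P | pre p t || post t p}) q : q = val p -> pre q t || post t q.
Proof. by move=> ->; exact: (valP p). Qed.
Lemma adjP' (p : {p : P | pre p t || post t p}) q : val p = q -> pre q t || post t q.
Proof. by move=> <-; exact: (valP p). Qed.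

Lemma img' a : inS (t |: S) a <-> exists u, h' u = a.
Proof.
split.
- case: a => [p|t'] /=.
  + case/existsP => t' /andP []; rewrite in_setU1 => /orP [/eqP ->|Ht'] adj.
    * by exists (fB A (Some (exist _ p adj) : mnode B)); rewrite hfB.
    * have : inS S (inl p) by apply/existsP; exists t'; rewrite Ht'.
      by case/(iw_img W) => x hx; exists (inl x).
  + rewrite in_setU1 => /orP [/eqP ->|Ht'].
    * by exists (fB A (None : mnode B)); rewrite hfB.
    * have : inS S (inr t') by [].
      by case/(iw_img W) => x hx; exists (inl x).
- case=> [[x|[y hy]] <-] /=.
  + have : inS S (h x) by apply/(iw_img W); exists x.
    case: (h x) => [p|t'] /=.
    * case/existsP => t' /andP [H1 H2]; apply/existsP; exists t'.
      by rewrite !inE H1 orbT.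
    * by rewrite !inE => ->; rewrite orbT.
  + case: y hy => [p|] _ /=.
    * by apply/existsP; exists t; rewrite !inE eqxx (valP p).
    * by rewrite !inE eqxx.
Qed.

Lemma edge_split a b : nedge a b -> inS (t |: S) a -> inS (t |: S) b ->
  (inS S a /\ inS S b) \/ ((exists y, g y = a) /\ (exists y, g y = b)).
Proof.
case: a => [p|t1]; case: b => [p'|t2] //= E.
- move=> _; rewrite !inE => /orP [/eqP e|Ht2].
  + subst t2; have adj : pre p t || post t p by rewrite E.
    by right; split; [exists (Some (exist _ p adj)) | exists None].
  + by left; split => //; apply/existsP; exists t2; rewrite Ht2 E.
- rewrite !inE => /orP [/eqP e|Ht1] _.
  + subst t1; have adj : pre p' t || post t p' by rewrite E orbT.
    by right; split; [exists None | exists (Some (exist _ p' adj))].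
  + by left; split => //; apply/existsP; exists t1; rewrite Ht1 E orbT.
Qed.

Lemma edge' u v : comp_edge u v = nedge (h' u) (h' v).
Proof.
rewrite /comp_edge; apply/idP/idP.
- case/orP.
  + case/existsP => x /existsP [z /and3P [E /eqP <- /eqP <-]] /=.
    by rewrite -(iw_edge W).
  + case/existsP => y /existsP [w /and3P [E]]; rewrite !fBE => /eqP <- /eqP <-.
    by case: y w E => [p|] [q|].
- move=> E.
  have Ia : inS (t |: S) (h' u) by apply/img'; exists u.
  have Ib : inS (t |: S) (h' v) by apply/img'; exists v.
  case: (edge_split E Ia Ib) => [[/(iw_img W) [x hx] /(iw_img W) [z hz]] | [[y hy] [w hw]]].
  + apply/orP; left; apply/existsP; exists x; apply/existsP; exists z.
    by rewrite !fAE hx hz !eqxx (iw_edge W) hx hz E.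
  + apply/orP; right; apply/existsP; exists y; apply/existsP; exists w.
    rewrite !fBE hy hw !eqxx !andbT; rewrite -hy -hw in E.
    by case: y w E {hy hw} => [p|] [q|].
Qed.

Lemma Lmem u : (u \in comp_L A B) = isplace (h' u).
Proof.
rewrite inE; case: u => [x|[y0 hy0]] /=.
- apply/orP/idP.
  + case => [/existsP [x0 /andP [L0]]|/existsP [y /and3P [_ nm]]].
    * by rewrite fAE /= => /eqP/(iw_inj W) <-; rewrite -(iw_L W).
    * by have [hy ->] := fB_nm nm.
  + move=> pl; left; apply/existsP; exists x; by rewrite (iw_L W) pl /fA eqxx.
- apply/orP/idP.
  + case => [/existsP [x0 /andP [_ ]]|/existsP [y /and3P [Ly _]]].
    * by rewrite /fA.
    * rewrite fBE /= => /eqP/g_inj e; subst y0.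
      by move: Ly; rewrite inE; case: y {hy0}.
  + move=> pl; right; apply/existsP; exists y0; rewrite hy0 inE fBE /= eqxx !andbT.
    by case: y0 pl {hy0}.
Qed.

Lemma mcount_pos q : 0 < mcount A B (Some q) ->
  (pre q t || post t q) /\ exists x, h x = inl q.
Proof.
rewrite /mcount card_gt0 => /set0Pn [[x y]]; rewrite inE /= harmonicE.
case: y => [p|] //= /andP [/eqP hx].
have Rx : x \in mR A by rewrite (iw_R W) hx.
have [-> _] := iw_Rlab W Rx.
rewrite hx /= => /eqP [e].
by split; [exact: adjP' e | exists x; rewrite hx e].
Qed.

Lemma Llab u : u \in comp_L A B -> comp_llab u = plabel (h' u) /\ comp_lidx u = 1.
Proof.
move=> Lu; have := Lu; rewrite Lmem.
case: u Lu => [x|[y0 hy0]] /= _ pl.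
- by apply: (iw_Llab W); rewrite (iw_L W).
- case: y0 hy0 pl => [p|] hy0 //= _; split => //.
  have nm := unmatched hy0.
  have -> : pcount A (Some (val p)) = 0.
    apply/eqP; rewrite cards_eq0; apply/eqP/setP => x; rewrite !inE.
    apply/negbTE/negP => /andP [Lx /eqP e].
    have [e1 _] := iw_Llab W Lx.
    move: e; rewrite e1; case E: (h x) => [q|] //= [eq].
    by move: (nm x); rewrite E eq eqxx.
  have -> : mcount A B (Some (val p)) = 0.
    apply/eqP; rewrite -leqn0 leqNgt; apply/negP => /mcount_pos [_ [x hx]].
    by move: (nm x); rewrite hx eqxx.
  by [].
Qed.

Lemma Rmem u : (u \in comp_R A B) = isplace (h' u).
Proof.
rewrite inE; apply/orP/idP.
- case => [/existsP [y /andP [Ry]]|/existsP [x /and3P [Rx _]]].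
  + rewrite fBE => /eqP <-. by move: Ry; rewrite inE; case: y.
  + rewrite fAE => /eqP <-. by rewrite -(iw_R W).
- move=> pl; case E: (h' u) pl => [q|//] _.
  case adj: (pre q t || post t q).
  + left; apply/existsP; exists (Some (exist _ q adj) : mnode B); by rewrite inE fBE E /= eqxx.
  + right; case: u E => [x|[y0 hy0]] /= E.
    * apply/existsP; exists x; rewrite (iw_R W) E fAE /= E eqxx andbT /=.
      apply/existsPn => y; rewrite harmonicE E; case: y => [p|] //.
      apply/negP => /eqP [e]; by rewrite (adjP e) in adj.
    * exfalso; case: y0 hy0 E => [p|] _ //= [e]; by rewrite (adjP' e) in adj.
Qed.

Lemma Rlab u : u \in comp_R A B -> comp_rlab u = plabel (h' u) /\ comp_ridx u = 1.
Proof.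
move=> Ru; have pl : isplace (h' u) by rewrite -Rmem.
rewrite /comp_rlab /comp_ridx; case: pickP => [y /andP [Ry]|none].
- rewrite fBE => /eqP <-. by case: y Ry; rewrite ?inE.
- case E: (h' u) pl => [q|//] _.
  have nadj : ~~ (pre q t || post t q).
    apply/negP => adj; move: (none (Some (exist _ q adj) : mnode B)).
    by rewrite inE fBE E /= eqxx.
  case: u Ru E {none} => [x|[y0 hy0]] Ru /= E.
  + have Rx : x \in mR A by rewrite (iw_R W) E.
    have [e1 e2] := iw_Rlab W Rx; rewrite e1 e2 E /=; split => //.
    have -> : qcount B (Some q) = 0.
      apply/eqP; rewrite cards_eq0; apply/eqP/setP => y; rewrite !inE.
      case: y => [p|] //=; apply/negbTE/eqP => [[e]].
      by rewrite (adjP' e) in nadj.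
    have -> : mcount A B (Some q) = 0.
      apply/eqP; rewrite -leqn0 leqNgt; apply/negP => /mcount_pos [adj _].
      by rewrite adj in nadj.
    by [].
  + exfalso; case: y0 hy0 E {Ru} => [p|] _ //= [e].
    by rewrite (adjP' e) in nadj.
Qed.

Lemma step_invW : @InvW (compose A B) (t |: S) h'.
Proof.
split.
- exact: h'_inj.
- exact: img'.
- exact: edge'.
- exact: Lmem.
- exact: Rmem.
- exact: Llab.
- exact: Rlab.
Qed.
End Step.
End Proof.

Lemma step_Inv (P T : finType) (pre : P -> T -> bool) (post : T -> P -> bool)
  (A : modul P) S t : Inv pre post A S -> t \notin S ->
  Inv pre post (compose A (atom pre post t)) (t |: S).
Proof. by case=> h W tS; exists (h' (pre:=pre) (post:=post) (t:=t) h); apply: step_invW. Qed.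

Lemma empty_Inv (P T : finType) (pre : P -> T -> bool) (post : T -> P -> bool) :
  Inv pre post (empty_mod P) set0.
Proof.
exists (fun x : void => match x with end); split; try by case.
case=> [p|t] /=; split; try by case.
- by case/existsP => t'; rewrite inE.
- by rewrite inE.
Qed.

Lemma fold_Inv (P T : finType) (pre : P -> T -> bool) (post : T -> P -> bool) ts :
  forall A S, Inv pre post A S -> uniq ts -> (forall t, t \in ts -> t \notin S) ->
  Inv pre post (foldl (fun A t => compose A (atom pre post t)) A ts) (S :|: [set t in ts]).
Proof.
elim: ts => [|t ts IH] A S I /=.
  by move=> _ _; rewrite (_ : S :|: _ = S) //; apply/setP => x; rewrite !inE orbF.
case/andP => tts uts H.
have I' := step_Inv I (H t (mem_head _ _)).
have := IH _ _ I' uts.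
rewrite (_ : (t |: S) :|: [set x in ts] = S :|: [set x in t :: ts]).
  apply => x xts; rewrite !inE negb_or H ?inE ?xts ?orbT // andbT.
  by apply/eqP => e; subst x; rewrite xts in tts.
by apply/setP => x; rewrite !inE; case: (x == t); case: (x \in S); case: (x \in ts).
Qed.

Theorem mainTheorem2 (P T : finType) (pre : P -> T -> bool)
    (post : T -> P -> bool) (ts : seq T) :
  (forall p : P, exists t : T, pre p t || post t p) ->
  (forall t : T, exists p : P, pre p t || post t p) ->
  uniq ts -> (forall t : T, t \in ts) ->
  mod_iso (foldl (fun A t => compose A (atom pre post t)) (empty_mod P) ts)
          (net_mod pre post).
Proof.
move=> HP _ uts allts.
have [h W] := fold_Inv (empty_Inv pre post) uts (fun t _ => negbT (in_set0 t)).
have surj : forall a, exists x, h x = a.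
  move=> a; apply/(iw_img W); case: a => [p|t] /=.
    by have [t Ht] := HP p; apply/existsP; exists t; rewrite !inE allts Ht.
  by rewrite !inE allts.
have bij : bijective h.
  apply: inj_card_bij; first exact: (iw_inj W).
  rewrite -(card_codom (iw_inj W)); apply: subset_leq_card; apply/subsetP => a _.
  by have [x <-] := surj a; apply: codom_f.
exists h; split => //; split; first by move=> x y; rewrite (iw_edge W).
split; first by move=> x; rewrite inE (iw_L W).
split; first by move=> x; rewrite inE (iw_R W).
split.
  move=> x Lx; have [-> ->] := iw_Llab W Lx.
  by move: Lx; rewrite (iw_L W); case: (h x).
move=> x Rx; have [-> ->] := iw_Rlab W Rx.
by move: Rx; rewrite (iw_R W); case: (h x).
Qed.
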